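(* Let $G=(V,E)$ be a claw-free graph and $I$ a maximum cardinality independent set of $G$. Let $\mathtt{T2}=\bigcup_{a\in I}\mathtt{T2}^a$ and let $G_{\mathtt{T2}}$ be the graph with vertex set $\mathtt{T2}$ whose edges are those edges of $G[\mathtt{T2}]$ whose endpoints lie in different $1$-packs. Let $v,w\in\mathtt{T2}$ with $v\in V_a$, $w\in V_b$, $a\ne b$. Then $vw\in E$ if and only if $v$ and $w$ lie in the same connected component of $G_{\mathtt{T2}}$.
   Context: Graphs are finite, simple, undirected; claw-free means no induced $K_{1,3}$. For $a\in I$, the $1$-pack $V_a$ is $\{v\in V\setminus I : N(v)\cap I=\{a\}\}$. For $a\in I$, $\mathtt{T2}^a$ is the set of vertices $v\in V_a$ that have neighbours in at least two distinct $1$-packs other than $V_a$. *)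

(* Defs.v *)
From mathcomp Require Import all_boot.
Set Implicit Arguments. Unset Strict Implicit. Unset Printing Implicit Defensive.

Section Graphs.
Variables (T : finType) (e : rel T).

Definition simple_graph : Prop := symmetric e /\ irreflexive e.

Definition claw_free : Prop :=
  forall c x y z : T, e c x -> e c y -> e c z ->
    x != y -> x != z -> y != z ->
    e x y || e x z || e y z.

Definition independent (I : {set T}) : bool :=
  [forall x in I, forall y in I, ~~ e x y].

Definition maximum_independent (I : {set T}) : Prop :=
  independent I /\ forall J : {set T}, independent J -> #|J| <= #|I|.

Definition pack (I : {set T}) (a : T) : {set T} :=
  [set v | (v \notin I) && ([set u in I | e v u] == [set a])].

Definition T2a (I : {set T}) (a : T) : {set T} :=
  [set v in pack I a | [exists b1 in I, exists b2 in I,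
     [&& b1 != b2, b1 != a, b2 != a,
         [exists u in pack I b1, e v u] &
         [exists u in pack I b2, e v u]]]].

Definition T2 (I : {set T}) : {set T} := \bigcup_(a in I) T2a I a.

Definition GT2 (I : {set T}) : rel T := fun x y =>
  [&& x \in T2 I, y \in T2 I, e x y &
      [exists a in I, exists b in I,
         [&& a != b, x \in pack I a & y \in pack I b]]].

End Graphs.

(* Main.v *)
Require Import Defs.
From mathcomp Require Import all_boot.
Set Implicit Arguments. Unset Strict Implicit. Unset Printing Implicit Defensive.

Lemma pack_adj (T : finType) (e : rel T) I z c :
  z \in pack e I c -> [/\ z \notin I, c \in I & e z c].
Proof.
rewrite inE => /andP [zI /eqP H].
have : c \in [set u in I | e z u] by rewrite H set11.
by rewrite inE => /andP [-> ->].
Qed.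

Lemma pack_e (T : finType) (e : rel T) I z c c' :
  z \in pack e I c -> c' \in I -> e z c' = (c' == c).
Proof.
rewrite inE => /andP [zI /eqP H] c'I.
have : (c' \in [set u in I | e z u]) = (c' \in [set c]) by rewrite H.
by rewrite !inE c'I.
Qed.

Lemma pack_uniq (T : finType) (e : rel T) I z c d :
  z \in pack e I c -> z \in pack e I d -> c = d.
Proof.
move=> zc zd; have [_ dI ezd] := pack_adj zd.
by move: ezd; rewrite (pack_e zc dI) => /eqP.
Qed.

Lemma pack_neq (T : finType) (e : rel T) I p q c d :
  p \in pack e I c -> q \in pack e I d -> c != d -> p != q.
Proof.
move=> pc qd; apply: contraNneq => E; subst q.
by rewrite (pack_uniq pc qd).
Qed.

Lemma nadj (T : finType) (e : rel T) I p c a :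
  p \in pack e I c -> a \in I -> a != c -> ~~ e p a.
Proof. by move=> pc aI; rewrite (pack_e pc aI). Qed.

Lemma clique_at (T : finType) (e : rel T) I x a p q :
  simple_graph e -> claw_free e ->
  x \in pack e I a -> e x p -> e x q -> p != q ->
  p \notin I -> q \notin I -> ~~ e p a -> ~~ e q a -> e p q.
Proof.
move=> [sym irr] cf xa exp exq pq pI qI npa nqa.
have [_ aI exa] := pack_adj xa.
have ap : a != p by apply/eqP=> E; rewrite -E aI in pI.
have aq : a != q by apply/eqP=> E; rewrite -E aI in qI.
have := cf x a p q exa exp exq ap aq pq.
by rewrite (sym a p) (sym a q) (negbTE npa) (negbTE nqa).
Qed.

Lemma T2_nbr (T : finType) (e : rel T) I z a b :
  z \in T2 e I -> z \in pack e I a ->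
  exists u c', [/\ u \in pack e I c', e z u, c' != a & c' != b].
Proof.
move=> /bigcupP [a' a'I]; rewrite inE => /andP [za' /existsP [b1 /andP [b1I
  /existsP [b2 /andP [b2I /and5P [b12 b1a b2a /existsP [u1 /andP [u1p ez1]]
  /existsP [u2 /andP [u2p ez2]]]]]]]] za.
have Ea := pack_uniq za' za; subst a'.
case: (eqVneq b1 b) => [E|Nb].
- subst b1; exists u2, b2; split => //; by rewrite eq_sym.
- by exists u1, b1.
Qed.

Lemma key (T : finType) (e : rel T) I x y z z' a b c d :
  simple_graph e -> claw_free e ->
  x \in pack e I a -> y \in pack e I b -> b != a -> e x y ->
  z \in T2 e I -> z \in pack e I c -> z != y -> e x z ->
  z' \in pack e I d -> d != c -> e z z' -> (z' = x \/ e x z') -> e z y.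
Proof.
move=> sg cf xa yb ba exy zT zc zy exz z'd dc ezz' hz'.
have [sym irr] := sg.
have [xI aI _] := pack_adj xa.
have [yI bI _] := pack_adj yb.
have [zI cI _] := pack_adj zc.
have [z'I dI _] := pack_adj z'd.
case: (eqVneq c a) => [Eca|Nca]; last first.
  apply: (clique_at sg cf xa exz exy zy zI yI).
    by apply: (nadj zc aI); rewrite eq_sym.
  by apply: (nadj yb aI); rewrite eq_sym.
subst c.
have exz' : e x z'.
  case: hz' => // E; subst z'.
  by move: (pack_uniq z'd xa) dc => ->; rewrite eqxx.
case: (eqVneq z' y) => [E|Nz'y]; first by rewrite -E.
have ez'y : e z' y.
  apply: (clique_at sg cf xa exz' exy Nz'y z'I yI).
    by apply: (nadj z'd aI); rewrite eq_sym.
  by apply: (nadj yb aI); rewrite eq_sym.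
case: (eqVneq d b) => [Edb|Ndb]; last first.
  apply: (clique_at sg cf z'd _ ez'y zy zI yI).
  - by rewrite sym.
  - by apply: (nadj zc dI); rewrite // eq_sym.
  - by apply: (nadj yb dI).
subst d.
have [u [c' [uc' ezu c'a c'b]]] := T2_nbr b zT zc.
have [uI c'I _] := pack_adj uc'.
have ez'u : e z' u.
  apply: (clique_at sg cf zc ezz' ezu _ z'I uI).
  - by apply: (pack_neq z'd uc'); rewrite eq_sym.
  - by apply: (nadj z'd aI); rewrite eq_sym.
  - by apply: (nadj uc' aI); rewrite eq_sym.
have exu : e x u.
  apply: (clique_at sg cf z'd _ ez'u _ xI uI).
  - by rewrite sym.
  - by apply: (pack_neq xa uc'); rewrite eq_sym.
  - by apply: (nadj xa bI).
  - by apply: (nadj uc' bI); rewrite eq_sym.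
have eyu : e y u.
  apply: (clique_at sg cf xa exy exu _ yI uI).
  - by apply: (pack_neq yb uc'); rewrite eq_sym.
  - by apply: (nadj yb aI); rewrite // eq_sym.
  - by apply: (nadj uc' aI); rewrite eq_sym.
apply: (clique_at sg cf uc' _ _ zy zI yI).
- by rewrite sym.
- by rewrite sym.
- exact: (nadj zc c'I).
- exact: (nadj yb c'I).
Qed.

Lemma GT2P (T : finType) (e : rel T) I x y :
  GT2 e I x y -> [/\ x \in T2 e I, y \in T2 e I, e x y &
    exists a b, [/\ a != b, x \in pack e I a & y \in pack e I b]].
Proof.
case/and4P => xT yT exy /existsP [a /andP [_ /existsP [b /andP [_ /and3P [ab xa yb]]]]].
by split => //; exists a, b.
Qed.

Lemma GT2_sym (T : finType) (e : rel T) I x y :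
  symmetric e -> GT2 e I x y -> GT2 e I y x.
Proof.
move=> sym /GT2P [xT yT exy [a [b [ab xa yb]]]].
have [_ aI _] := pack_adj xa. have [_ bI _] := pack_adj yb.
rewrite /GT2 xT yT sym exy /=.
apply/existsP; exists b; rewrite bI /=; apply/existsP; exists a.
by rewrite aI eq_sym ab xa yb.
Qed.

Lemma inv_path (T : finType) (e : rel T) I :
  simple_graph e -> claw_free e ->
  forall p x, path (GT2 e I) x p -> x \in T2 e I ->
  (forall z, z \in x :: p -> z \in T2 e I /\
      (z = x \/ exists2 z', z' \in x :: p & GT2 e I z z')) /\
  (forall z1 z2, z1 \in x :: p -> z2 \in x :: p -> z1 = z2 \/ e z1 z2).
Proof.
move=> sg cf; have [sym irr] := sg.
elim=> [|y p IH] x.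
  move=> _ xT; split.
    by move=> z; rewrite inE => /eqP ->; split => //; left.
  by move=> z1 z2; rewrite !inE => /eqP -> /eqP ->; left.
rewrite /= => /andP [gxy pth] xT.
have [_ yT exy [ax [by_ [axb xa yb]]]] := GT2P gxy.
have [A B] := IH y pth yT.
have newpt : forall z, z \in y :: p -> z = x \/ e z x.
  move=> z zin.
  case: (eqVneq z x) => [->|zx]; first by left.
  right.
  case: (eqVneq z y) => [->|zy]; first by rewrite sym.
  have [zT [E|[z' z'in gzz']]] := A z zin; first by rewrite E eqxx in zy.
  have [_ _ ezz' [c [d [cd zc z'd]]]] := GT2P gzz'.
  have eyz : e y z.
    by case: (B y z (mem_head _ _) zin) => // E; rewrite E eqxx in zy.
  have hz' : z' = y \/ e y z' by case: (B y z' (mem_head _ _) z'in); [left|right].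
  apply: (key sg cf yb xa axb _ zT zc zx eyz z'd _ ezz' hz').
  - by rewrite sym.
  - by rewrite eq_sym.
split.
  move=> z; rewrite in_cons => /orP [/eqP ->|zin]; first by split => //; left.
  have [zT [E|[z' z'in gzz']]] := A z zin; split => //; right.
  - by exists x; [exact: mem_head | rewrite E; apply: GT2_sym].
  - by exists z' => //; rewrite in_cons z'in orbT.
move=> z1 z2; rewrite (in_cons x) (in_cons x) => /orP [/eqP ->|z1in] /orP [/eqP ->|z2in].
- by left.
- by case: (newpt z2 z2in) => [->|E]; [left|right; rewrite sym].
- by case: (newpt z1 z1in) => [->|E]; [left|right].
- exact: B.
Qed.

Theorem lemma11 (T : finType) (e : rel T) (I : {set T}) (v w a b : T) :
  simple_graph e -> claw_free e -> maximum_independent e I ->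
  a \in I -> b \in I -> a != b ->
  v \in T2 e I -> w \in T2 e I ->
  v \in pack e I a -> w \in pack e I b ->
  e v w = connect (GT2 e I) v w.
Proof.
move=> sg cf _ aI bI ab vT wT va wb.
apply/idP/idP.
  move=> evw; apply: connect1.
  rewrite /GT2 vT wT evw /=.
  apply/existsP; exists a; rewrite aI /=; apply/existsP; exists b.
  by rewrite bI ab va wb.
move/connectP => [p pth Ew].
have [_ B] := inv_path sg cf pth vT.
have wi : w \in v :: p by rewrite Ew mem_last.
case: (B v w (mem_head _ _) wi) => // E.
by move: (pack_neq va wb ab); rewrite E eqxx.
Qed.
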